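(* Let $g:\mathbb{R}^n\to\mathbb{R}\cup\{+\infty\}$ be a proper closed convex function and let $f=f_1-f_2$, where $f_1,f_2:\mathbb{R}^n\to\mathbb{R}$ are convex differentiable functions such that $\nabla f_1$ is Lipschitz continuous with modulus $L>0$, $\nabla f_2$ is Lipschitz continuous with modulus $l\ge 0$, and $L\ge l$. Let $F=f+g$, and assume $\inf F>-\infty$ and that this infimum is attained. Let $\{x^k\}$ be generated by Algorithm 1 (described in the context) with $\{\beta_k\}\subseteq\big[0,\sqrt{L/(L+l)}\,\big]$, let $\bar\beta=\sup_k\beta_k$, and let $\alpha\in\big[\tfrac{L+l}{2}\bar\beta^2,\tfrac{L}{2}\big]$. Then: (i) for every $z\in\operatorname{dom} g$ and every $k\ge 0$, $$F(x^{k+1})\le F(z)+\frac{L+l}{2}\|z-y^k\|^2-\frac{L}{2}\|x^{k+1}-z\|^2;$$ (ii) for all $k\ge0$, $$H_{k+1,\alpha}-H_{k,\alpha}\le\Big(-\frac L2+\alpha\Big)\|x^{k+1}-x^k\|^2+\Big(\frac{L+l}{2}\beta_k^2-\alpha\Big)\|x^k-x^{k-1}\|^2;$$ (iii) the sequence $\{H_{k,\alpha}\}$ is nonincreasing.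
   Context: For a proper closed convex $h$, $\mathrm{Prox}_h(v)=\arg\min_{x\in\mathbb{R}^n}\{h(x)+\tfrac12\|x-v\|^2\}$. Algorithm 1 (proximal gradient algorithm with extrapolation): choose $x^0\in\operatorname{dom} g$ and $\{\beta_k\}\subseteq[0,\sqrt{L/(L+l)}]$, set $x^{-1}=x^0$, and for $k=0,1,2,\dots$ set $y^k=x^k+\beta_k(x^k-x^{k-1})$ and $x^{k+1}=\mathrm{Prox}_{\frac1L g}\big(y^k-\tfrac1L\nabla f(y^k)\big)$. For $\alpha\ge0$, $H_{k,\alpha}:=F(x^k)+\alpha\|x^k-x^{k-1}\|^2$. *)

(* Defs.v *)
From HB Require Import structures.
From mathcomp Require Import all_boot all_order all_algebra.
From mathcomp Require Import all_classical all_reals all_analysis.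
Set Implicit Arguments. Unset Strict Implicit. Unset Printing Implicit Defensive.
Import Order.TTheory GRing.Theory Num.Theory.
Import numFieldNormedType.Exports.
Local Open Scope ring_scope.

Section Defs.
Variables (R : realType) (n : nat).
Local Notation vec := 'rV[R]_n.

Definition dotv (u v : vec) : R := \sum_(i < n) u ord0 i * v ord0 i.
Definition enorm (u : vec) : R := Num.sqrt (dotv u u).

Definition convex_fun (f : vec -> R) : Prop :=
  forall (x y : vec) (t : R), 0 <= t <= 1 ->
    f (t *: x + (1 - t) *: y) <= t * f x + (1 - t) * f y.

Definition is_gradient (f : vec -> R) (G : vec -> vec) : Prop :=
  forall x : vec, differentiable f x /\ forall h : vec, 'd f x h = dotv (G x) h.

Definition lipschitz_with (G : vec -> vec) (L : R) : Prop :=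
  forall x y : vec, enorm (G x - G y) <= L * enorm (x - y).

Definition in_dom (g : vec -> \bar R) (x : vec) : Prop := (g x < +oo)%E.

Definition proper_fun (g : vec -> \bar R) : Prop :=
  (forall x, -oo < g x)%E /\ exists x, in_dom g x.

(* closed = lower semicontinuous *)
Definition lsc_fun (g : vec -> \bar R) : Prop :=
  forall (x : vec) (a : R), (a%:E < g x)%E ->
    exists2 d : R, 0 < d & forall y, enorm (y - x) < d -> (a%:E < g y)%E.

Definition convex_efun (g : vec -> \bar R) : Prop :=
  forall (x y : vec) (t : R), 0 <= t <= 1 ->
    (g (t *: x + (1 - t) *: y)%R <= t%:E * g x + (1 - t)%R%:E * g y)%E.

(* p = Prox_h(v), i.e. p minimizes h(.) + 1/2 ||. - v||^2
   (the minimizer is unique for proper closed convex h) *)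
Definition is_prox (h : vec -> \bar R) (v p : vec) : Prop :=
  forall z : vec,
    (h p + (enorm (p - v)%R ^+ 2 / 2)%R%:E <= h z + (enorm (z - v)%R ^+ 2 / 2)%R%:E)%E.

(* Algorithm 1: x^{-1} = x^0 is encoded by x (k.-1) with 0.-1 = 0 *)
Definition extrap (x : nat -> vec) (beta : nat -> R) (k : nat) : vec :=
  x k + beta k *: (x k - x k.-1).

Definition alg1 (g : vec -> \bar R) (gradf : vec -> vec) (L : R)
    (beta : nat -> R) (x : nat -> vec) : Prop :=
  forall k, is_prox (fun u => (L^-1)%:E * g u)%E
              (extrap x beta k - L^-1 *: gradf (extrap x beta k)) (x k.+1).

Definition Hseq (F : vec -> \bar R) (x : nat -> vec) (alpha : R) (k : nat) : \bar R :=
  (F (x k) + (alpha * enorm (x k - x k.-1) ^+ 2)%R%:E)%E.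

End Defs.

(* Main.v *)
Require Import Defs.
From HB Require Import structures.
From mathcomp Require Import all_boot all_order all_algebra.
From mathcomp Require Import all_classical all_reals all_analysis.
From mathcomp Require Import ring lra.
Import Order.TTheory GRing.Theory Num.Theory.
Import numFieldNormedType.Exports.
Local Open Scope ring_scope.

Local Open Scope classical_set_scope.
Lemma right_sub (R : realType) : ((0:R)^'+ : set_system R) `=>` (0:R)^'.
Proof.
move=> P; rewrite /at_right /dnbhs /within /=; apply: filterS => y Py y0.
by apply: Py; rewrite lt0r_neq0.
Qed.
Local Close Scope classical_set_scope.

Set Implicit Arguments. Unset Strict Implicit.
Section Aux.
Variables (R : realType) (n : nat).
Local Notation vec := 'rV[R]_n.

Lemma grad_ineq (f : vec -> R) (G : vec -> vec) :
  convex_fun f -> is_gradient f G ->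
  forall y z, f y + dotv (G y) (z - y) <= f z.
Proof.
move=> cf gf y z; set v := z - y.
have [dfy dG] := gf y.
rewrite -dG -deriveE //.
have D := @diff_derivable _ _ _ f y v dfy.
have Dr := cvg_trans (cvg_app _ (@right_sub R)) D.
rewrite -lerBrDl.
apply: (cvgr_to_le Dr).
near=> h.
have h0 : 0 < h by near: h; exact: nbhs_right_gt.
have h1 : h < 1 by near: h; exact: nbhs_right_lt.
rewrite /= /shift.
have -> : h *: v + y = h *: z + (1 - h) *: y.
  by rewrite /v scalerBr scalerBl scale1r addrAC -addrA.
have := cf z y h; rewrite (ltW h0) (ltW h1) => /(_ isT) H.
rewrite -[_ *: _]/(h^-1 * _) ler_pdivrMl //.
lra.
Unshelve. all: by end_near.
Qed.


Lemma small_t (a b c : R) : (forall t, 0 < t <= 1 -> a <= b + t * c) -> a <= b.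
Proof.
move=> H; rewrite leNgt; apply/negP => ab.
set e := a - b.
have e0 : 0 < e by rewrite /e subr_gt0.
have n0 : 0 <= `|c| by [].
have en : 0 < e + `|c| by lra.
have := H (e / (e + `|c|)).
have t0 : 0 < e / (e + `|c|) by apply: divr_gt0.
have t1 : e / (e + `|c|) <= 1 by rewrite ler_pdivrMr // mul1r; lra.
rewrite t0 t1 => /(_ isT).
have : e / (e + `|c|) * c <= e / (e + `|c|) * `|c|.
  by rewrite ler_pM2l // real_ler_norm // num_real.
have : e / (e + `|c|) * `|c| < e.
  rewrite mulrAC ltr_pdivrMr // mulrDr; have := mulr_gt0 e0 e0; lra.
rewrite /e; lra.
Qed.

Lemma small_pow (a b c : R) : 0 <= c -> (forall k : nat, a <= b + c / 2 ^+ k) -> a <= b.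
Proof.
move=> c0 H; apply: small_t => t /andP [t0 t1].
have ti : 0 <= t^-1 by rewrite invr_ge0 ltW.
have := archi_boundP ti; set k := Num.Def.archi_bound _ => hk.
have hk2 : (k%:R : R) <= 2 ^+ k.
  rewrite -(natrX R 2 k) ler_nat; apply: ltnW; exact: ltn_expl.
have p0 : (0 : R) < 2 ^+ k by rewrite exprn_gt0.
apply: (le_trans (H k)); rewrite lerD2l.
rewrite ler_pdivrMr //.
have : 1 <= t * 2 ^+ k.
  have h : t * t^-1 < t * 2 ^+ k by rewrite ltr_pM2l //; lra.
  by rewrite mulfV ?gt_eqF // in h; apply: ltW.
move=> h; have h' := ler_wpM2l c0 h; rewrite mulr1 in h'.
by apply: (le_trans h'); rewrite mulrA (mulrC c t).
Qed.

Lemma dotvC (u v : vec) : dotv u v = dotv v u.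
Proof. by rewrite /dotv; apply: eq_bigr => i _; rewrite mulrC. Qed.

Lemma dotvDl (u v w : vec) : dotv (u + v) w = dotv u w + dotv v w.
Proof. by rewrite /dotv -big_split; apply: eq_bigr => i _; rewrite mxE mulrDl. Qed.

Lemma dotvZl (a : R) (u v : vec) : dotv (a *: u) v = a * dotv u v.
Proof. by rewrite /dotv mulr_sumr; apply: eq_bigr => i _; rewrite mxE mulrA. Qed.

Lemma dotvNl (u v : vec) : dotv (- u) v = - dotv u v.
Proof. by rewrite -scaleN1r dotvZl mulN1r. Qed.

Lemma dotvBl (u v w : vec) : dotv (u - v) w = dotv u w - dotv v w.
Proof. by rewrite dotvDl dotvNl. Qed.

Lemma dotvDr (u v w : vec) : dotv w (u + v) = dotv w u + dotv w v.
Proof. by rewrite dotvC dotvDl !(dotvC w). Qed.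

Lemma dotvZr (a : R) (u v : vec) : dotv v (a *: u) = a * dotv v u.
Proof. by rewrite dotvC dotvZl dotvC. Qed.

Lemma dotvNr (u v : vec) : dotv v (- u) = - dotv v u.
Proof. by rewrite dotvC dotvNl dotvC. Qed.

Lemma dotvBr (u v w : vec) : dotv w (u - v) = dotv w u - dotv w v.
Proof. by rewrite dotvDr dotvNr. Qed.

Lemma dotv_ge0 (u : vec) : 0 <= dotv u u.
Proof. by rewrite /dotv; apply: sumr_ge0 => i _; rewrite -expr2 sqr_ge0. Qed.

Lemma enorm_ge0 (u : vec) : 0 <= enorm u.
Proof. exact: sqrtr_ge0. Qed.

Lemma enorm_sq (u : vec) : enorm u ^+ 2 = dotv u u.
Proof. by rewrite /enorm sqr_sqrtr // dotv_ge0. Qed.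

Lemma dotv_sq (a b : R) (u v : vec) :
  dotv (a *: u + b *: v) (a *: u + b *: v) =
  a ^+ 2 * dotv u u + 2 * a * b * dotv u v + b ^+ 2 * dotv v v.
Proof.
rewrite !(dotvDl, dotvDr, dotvZl, dotvZr) (dotvC v u); ring.
Qed.

Lemma cauchy_schwarz (u v : vec) : dotv u v <= enorm u * enorm v.
Proof.
apply: (@small_t _ _ (enorm u + enorm v + 1)) => t /andP [t0 t1].
set nu := enorm u; set nv := enorm v.
have nu0 : 0 <= nu := enorm_ge0 u.
have nv0 : 0 <= nv := enorm_ge0 v.
have := dotv_ge0 ((nv + t) *: u + (- (nu + t)) *: v).
rewrite dotv_sq -!enorm_sq -/nu -/nv => H.
have ha : 0 < nv + t by lra.
have hb : 0 < nu + t by lra.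
have H1 : (nv + t) ^+ 2 * nu ^+ 2 <= (nv + t) ^+ 2 * (nu + t) ^+ 2.
  by rewrite ler_pM2l ?exprn_gt0 // lerXn2r // ?nnegrE; lra.
have H2 : (nu + t) ^+ 2 * nv ^+ 2 <= (nu + t) ^+ 2 * (nv + t) ^+ 2.
  by rewrite ler_pM2l ?exprn_gt0 // lerXn2r // ?nnegrE; lra.
have hab : 0 < (nv + t) * (nu + t) by apply: mulr_gt0.
have H3 : dotv u v <= (nv + t) * (nu + t).
  rewrite -(ler_pM2l hab); lra.
have tt : t * t <= t * 1 by rewrite ler_pM2l.
lra.
Qed.


Lemma lip_dot (G : vec -> vec) (L : R) : lipschitz_with G L ->
  forall a b, dotv (G a - G b) (a - b) <= L * dotv (a - b) (a - b).
Proof.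
move=> HL a b; apply: (le_trans (cauchy_schwarz _ _)).
rewrite -enorm_sq expr2 mulrA ler_wpM2r ?enorm_ge0 //; exact: HL.
Qed.

Lemma descent (f : vec -> R) (G : vec -> vec) (L : R) : 0 <= L ->
  convex_fun f -> is_gradient f G -> lipschitz_with G L ->
  forall y d, f (y + d) <= f y + dotv (G y) d + L / 2 * dotv d d.
Proof.
move=> L0 cf gf HL.
have claim : forall k y d, f (y + d) - f y - dotv (G y) d <=
    (L / 2 + L / 2 ^+ k.+1) * dotv d d.
  elim=> [|k IH] y d.
    have h1 := grad_ineq cf gf (y + d) y.
    have h2 := lip_dot HL (y + d) y.
    have e1 : y - (y + d) = - d by rewrite opprD addrA subrr add0r.
    have e2 : y + d - y = d by rewrite addrC addKr.
    rewrite e1 dotvNr in h1; rewrite e2 dotvBl in h2.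
    have -> : L / 2 + L / 2 ^+ 1 = L by rewrite expr1 -splitr.
    lra.
  set e := 2^-1 *: d.
  have h1 := IH (y + e) e.
  have h2 := IH y e.
  have h3 := lip_dot HL (y + e) y.
  have e1 : y + e + e = y + d.
    by rewrite -addrA -scalerDl (_ : 2^-1 + 2^-1 = 1) ?scale1r //; lra.
  have e2 : y + e - y = e by rewrite addrC addKr.
  rewrite e1 in h1; rewrite e2 dotvBl in h3.
  have ed : dotv e e = 2^-1 * 2^-1 * dotv d d by rewrite /e dotvZl dotvZr mulrA.
  have gd : dotv (G y) e = 2^-1 * dotv (G y) d by rewrite /e dotvZr.
  rewrite ed in h1 h2 h3; rewrite gd in h2 h3.
  rewrite [2 ^+ k.+2]exprS invfM.
  set q := (2 ^+ k.+1)^-1 in h1 h2 h3 *.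
  have i2 : (2 : R)^-1 * 2 = 1 by rewrite mulVf.
  rewrite /= in h1 h2 h3 *.
  have hq : L * q = L * q * (2^-1 * 2) by rewrite i2 mulr1.
  lra.
move=> y d.
have dd0 := dotv_ge0 d.
suff : f (y + d) - f y - dotv (G y) d <= L / 2 * dotv d d by lra.
apply: (@small_pow _ _ (L * dotv d d)); first exact: mulr_ge0.
move=> k; apply: (le_trans (claim k y d)).
rewrite exprS invfM.
have q0 : 0 <= (2 ^+ k : R)^-1 by rewrite invr_ge0 exprn_ge0.
set q := (2 ^+ k : R)^-1 in q0 *.
have := mulr_ge0 (mulr_ge0 L0 q0) dd0.
lra.
Qed.


Lemma dotv_sq1 (t : R) (a b : vec) :
  dotv (a + t *: b) (a + t *: b) = dotv a a + 2 * t * dotv a b + t ^+ 2 * dotv b b.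
Proof. rewrite !(dotvDl, dotvDr, dotvZl, dotvZr) (dotvC b a); ring. Qed.

Lemma prox_ineq (g : vec -> \bar R) (L : R) (v p z : vec) (gp gz : R) :
  0 < L -> convex_efun g -> g p = gp%:E -> g z = gz%:E ->
  is_prox (fun u => (L^-1)%:E * g u)%E v p ->
  gp <= gz + L * dotv (p - v) (z - p).
Proof.
move=> L0 cg hp hz px.
have Li0 : 0 < L^-1 by rewrite invr_gt0.
suff H : L^-1 * gp <= L^-1 * gz + dotv (p - v) (z - p).
  have := ler_wpM2l (ltW L0) H.
  rewrite mulrDr !mulrA mulfV ?gt_eqF // !mul1r //.
apply: (@small_t _ _ (dotv (z - p) (z - p) / 2)) => t /andP [t0 t1].
set u := t *: z + (1 - t) *: p.
have cu := cg z p t; rewrite (ltW t0) t1 /= in cu; have {}cu := cu isT.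
rewrite hz hp -!EFinM -EFinD in cu.
have pu := px u; rewrite /= hp !enorm_sq in pu.
have eu : u - v = (p - v) + t *: (z - p).
  by apply/rowP => i; rewrite !mxE; ring.
rewrite eu dotv_sq1 in pu.
set D := dotv (z - p) (z - p) in pu *.
set P := dotv (p - v) (z - p) in pu *.
set Q := dotv (p - v) (p - v) in pu *.
move: pu cu; case: (g u) => [r||] //= pu cu.
- rewrite -!EFinM -!EFinD lee_fin in pu.
  rewrite lee_fin in cu.
  have cu' := ler_wpM2l (ltW Li0) cu.
  suff : t * (L^-1 * gp) <= t * (L^-1 * gz + P + t * (D / 2)).
    by rewrite ler_pM2l // addrA.
  lra.
- rewrite gt0_muleNy ?lte_fin // addNye -EFinM -EFinD leeNy_eq in pu.
Qed.


Lemma fin_of (g : vec -> \bar R) u : (-oo < g u)%E -> in_dom g u -> exists r, g u = r%:E.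
Proof. by rewrite /in_dom; case: (g u) => [r||] //; exists r. Qed.

Lemma prox_dom (g : vec -> \bar R) (L : R) (v p z : vec) :
  0 < L -> (forall u, -oo < g u)%E -> in_dom g z ->
  is_prox (fun u => (L^-1)%:E * g u)%E v p -> in_dom g p.
Proof.
move=> L0 gN hz px.
have [r hr] := fin_of (gN z) hz.
have := px z; rewrite /in_dom hr.
case: (g p) => [s _|//|//]; first exact: ltry.
rewrite gt0_muley ?lte_fin ?invr_gt0 // addye // -EFinM -EFinD leye_eq.
Qed.

Lemma vec_id1 (p y c : vec) : p - (y - c) = (p - y) + c.
Proof. by apply/rowP => i; rewrite !mxE; ring. Qed.

End Aux.
Unset Implicit Arguments.

Theorem lemma3p1 (R : realType) (n : nat)
    (g : 'rV[R]_n -> \bar R) (f1 f2 : 'rV[R]_n -> R)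
    (G1 G2 : 'rV[R]_n -> 'rV[R]_n) (L l : R)
    (x : nat -> 'rV[R]_n) (beta : nat -> R) (alpha : R) :
  proper_fun g -> lsc_fun g -> convex_efun g ->
  convex_fun f1 -> convex_fun f2 ->
  is_gradient f1 G1 -> is_gradient f2 G2 ->
  0 < L -> 0 <= l -> l <= L ->
  lipschitz_with G1 L -> lipschitz_with G2 l ->
  let F := fun u => ((f1 u - f2 u)%:E + g u)%E in
  (exists2 xs, (-oo < F xs)%E & forall u, (F xs <= F u)%E) ->
  in_dom g (x 0%N) ->
  (forall k, 0 <= beta k <= Num.sqrt (L / (L + l))) ->
  alg1 g (fun u => G1 u - G2 u) L beta x ->
  let betabar := sup (range beta) in
  (L + l) / 2 * betabar ^+ 2 <= alpha <= L / 2 ->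
  (forall z, in_dom g z -> forall k : nat,
     (F (x k.+1) <= F z + ((L + l) / 2 * enorm (z - extrap x beta k) ^+ 2
                           - L / 2 * enorm (x k.+1 - z) ^+ 2)%:E)%E)
  /\ (forall k : nat,
     (Hseq F x alpha k.+1 - Hseq F x alpha k <=
        ((- (L / 2) + alpha) * enorm (x k.+1 - x k) ^+ 2
         + ((L + l) / 2 * beta k ^+ 2 - alpha) * enorm (x k - x k.-1) ^+ 2)%:E)%E)
  /\ (forall m k : nat, (m <= k)%N -> (Hseq F x alpha k <= Hseq F x alpha m)%E).
Proof.
move=> [gN _] _ cg cf1 cf2 gf1 gf2 L0 l0 lL HL1 Hl2 F _ x0d hb halg betabar hal.
have partI : forall z, in_dom g z -> forall k : nat,
   exists gp gz, g (x k.+1) = gp%:E /\ g z = gz%:E /\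
   f1 (x k.+1) - f2 (x k.+1) + gp <= f1 z - f2 z + gz +
     ((L + l) / 2 * dotv (z - extrap x beta k) (z - extrap x beta k)
      - L / 2 * dotv (x k.+1 - z) (x k.+1 - z)).
  move=> z zd k.
  set y := extrap x beta k; set p := x k.+1.
  have px := halg k; rewrite -/y -/p in px.
  have pd := prox_dom L0 gN zd px.
  have [gp hp] := fin_of (gN p) pd.
  have [gz hz] := fin_of (gN z) zd.
  exists gp, gz; split => //; split => //.
  have h0 := prox_ineq L0 cg hp hz px.
  rewrite vec_id1 dotvDl dotvZl mulrDr mulrA mulfV ?gt_eqF // mul1r in h0.
  set a := p - y; set b := z - y.
  have e1 : z - p = b - a by apply/rowP => i; rewrite !mxE; ring.
  have e2 : p - z = a - b by apply/rowP => i; rewrite !mxE; ring.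
  have e3 : y + a = p by apply/rowP => i; rewrite !mxE; ring.
  have e4 : y + b = z by apply/rowP => i; rewrite !mxE; ring.
  rewrite -/a e1 in h0; rewrite -/b e2.
  have c1 := grad_ineq cf1 gf1 y z; rewrite -/b in c1.
  have c2 := grad_ineq cf2 gf2 y p; rewrite -/a in c2.
  clearbody a b.
  have d1 := descent (ltW L0) cf1 gf1 HL1 y a; rewrite e3 in d1.
  have d2 := descent l0 cf2 gf2 Hl2 y b; rewrite e4 in d2.
  rewrite !(dotvBl, dotvBr) in h0 *.
  rewrite ?(dotvC b a) in h0 *.
  lra.
have xd : forall k, in_dom g (x k).
  by case=> [//|k]; exact: prox_dom L0 gN x0d (halg k).
have gx : forall k, exists r, g (x k) = r%:E.
  by move=> k; exact: fin_of (gN (x k)) (xd k).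
have conc1 : forall z, in_dom g z -> forall k : nat,
     (F (x k.+1) <= F z + ((L + l) / 2 * enorm (z - extrap x beta k) ^+ 2
                           - L / 2 * enorm (x k.+1 - z) ^+ 2)%:E)%E.
  move=> z zd k; have [gp [gz [hp [hz ineq]]]] := partI z zd k.
  by rewrite /F hp hz -!EFinD lee_fin !enorm_sq.
have conc2 : forall k : nat,
     (Hseq F x alpha k.+1 - Hseq F x alpha k <=
        ((- (L / 2) + alpha) * enorm (x k.+1 - x k) ^+ 2
         + ((L + l) / 2 * beta k ^+ 2 - alpha) * enorm (x k - x k.-1) ^+ 2)%:E)%E.
  move=> k; have [gp [gk [hp [hk ineq]]]] := partI (x k) (xd k) k.
  rewrite /Hseq /F hp hk /= -!EFinD lee_fin !enorm_sq.
  have ex : x k - extrap x beta k = (- beta k) *: (x k - x k.-1).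
    by rewrite /extrap; apply/rowP => i; rewrite !mxE; ring.
  rewrite ex dotvZl dotvZr in ineq.
  set D1 := dotv (x k.+1 - x k) (x k.+1 - x k) in ineq *.
  set D0 := dotv (x k - x k.-1) (x k - x k.-1) in ineq *.
  have E : (L + l) / 2 * (- beta k * (- beta k * D0)) = (L + l) / 2 * beta k ^+ 2 * D0.
    by ring.
  rewrite E in ineq.
  lra.
split => //; split => //.
have Hfin : forall k, exists r, Hseq F x alpha k = r%:E.
  move=> k; have [r hr] := gx k.
  by eexists; rewrite /Hseq /F hr -!EFinD.
have bub : forall k, beta k <= betabar.
  move=> k; apply: sup_upper_bound; last by exists k.
  split; first by exists (beta 0%N), 0%N.
  exists (Num.sqrt (L / (L + l))) => _ [j _ <-].
  by case/andP: (hb j).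
have Hdec : forall k, (Hseq F x alpha k.+1 <= Hseq F x alpha k)%E.
  move=> k; have [r1 e1] := Hfin k.+1; have [r0 e0] := Hfin k.
  have := conc2 k; rewrite e1 e0 !lee_fin => h.
  have c1 : (- (L / 2) + alpha) * enorm (x k.+1 - x k) ^+ 2 <= 0.
    apply: mulr_le0_ge0; last exact: sqr_ge0.
    case/andP: hal => _ ha; lra.
  have c2 : ((L + l) / 2 * beta k ^+ 2 - alpha) * enorm (x k - x k.-1) ^+ 2 <= 0.
    apply: mulr_le0_ge0; last exact: sqr_ge0.
    have [b0 _] := andP (hb k).
    have bb : beta k ^+ 2 <= betabar ^+ 2.
      by rewrite !expr2; apply: ler_pM => //; exact: bub.
    have Ll : 0 <= (L + l) / 2 by apply: divr_ge0 => //; lra.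
    have := ler_wpM2l Ll bb.
    case/andP: hal => ha _; lra.
  lra.
move=> m k mk; rewrite -(subnKC mk).
elim: (k - m)%N => [|d IH]; first by rewrite addn0.
by rewrite addnS; apply: le_trans (Hdec _) IH.
Qed.
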